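(* Let $0<q<p$ with $p+q=1$, and let $\mathcal D$ be the set of Dyck words over $\{S,H\}$ (S an up-step, H a down-step: equally many S and H, every prefix with at least as many S as H), including the empty word, endowed with the probability measure $\bar{\mathbb P}[w]=p(pq)^{|w|}$, where $|w|$ is half the length of $w$. For every integer $n\ge1$, the $\bar{\mathbb P}$-probability that a Dyck word ends with the subsequence $SH\cdots H$ with exactly $n$ letters H at the end is $pq^n$.
   Context: $\bar{\mathbb P}$ is a probability measure on $\mathcal D$: $\bar{\mathbb P}[w]$ is the probability that a random walk from $0$, with up-step probability $q$ and down-step probability $p$, follows the path $w$ and then steps to $-1$. *)

(* Defs.v *)
From HB Require Import structures.
From mathcomp Require Import all_boot all_order all_algebra.
From mathcomp Require Import all_classical all_reals all_analysis.
Set Implicit Arguments. Unset Strict Implicit. Unset Printing Implicit Defensive.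
Import Order.TTheory GRing.Theory Num.Theory.
Local Open Scope ring_scope.

(* Words over {S,H}: [true] = S (up-step), [false] = H (down-step). *)

Fixpoint dyck_from (h : nat) (w : seq bool) : bool :=
  match w with
  | [::] => h == 0%N
  | b :: w' => if b then dyck_from h.+1 w'
               else if h is h'.+1 then dyck_from h' w' else false
  end.

Definition dyck (w : seq bool) : bool := dyck_from 0 w.

Definition half_len (w : seq bool) : nat := (size w)./2.

Definition Pbar (R : numDomainType) (p q : R) (w : seq bool) : R :=
  p * (p * q) ^+ half_len w.

Definition ends_SHn (n : nat) (w : seq bool) : bool :=
  suffix (true :: nseq n false) w.

(* Contribution to \bar P[A] of Dyck words of half-length k
   (words of length 2k, enumerated as tuples). *)
Definition Pbar_level (R : numDomainType) (p q : R) (A : pred (seq bool)) (k : nat) : R :=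
  \sum_(t : (k.*2).-tuple bool | dyck t && A t) Pbar p q t.

(* Main.v *)
Set Warnings "-all".
Require Import Defs.
From HB Require Import structures.
From mathcomp Require Import all_boot all_order all_algebra.
From mathcomp Require Import all_classical all_reals all_analysis.
From mathcomp Require Import zify ring lra.
Set Implicit Arguments. Unset Strict Implicit.
Import Order.TTheory GRing.Theory Num.Theory numFieldNormedType.Exports.
Local Open Scope classical_set_scope.
Local Open Scope ring_scope.

Lemma suffix_consE (s t : seq bool) x :
  suffix s (x :: t) = (s == x :: t) || suffix s t.
Proof.
apply/idP/idP.
  move=> /suffixP [[|y s'] /= E]; first by rewrite E eqxx.
  case: E => _ ->; apply/orP; right; exact: suffix_suffix.
case/orP => [/eqP -> | H]; first exact: suffix_refl.
exact: suffix_trans H (suffix_cons _ _).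
Qed.

Section S.
Variable R : realType.

Lemma sum_tuple_cons m (F : seq bool -> R) :
  \sum_(t : m.+1.-tuple bool) F t =
  \sum_(t : m.-tuple bool) F (true :: t) + \sum_(t : m.-tuple bool) F (false :: t).
Proof.
rewrite (reindex (fun x : bool * m.-tuple bool => [tuple of x.1 :: x.2])) /=.
  rewrite -(pair_big xpredT xpredT (fun b (t : m.-tuple bool) => F (b :: t))) /=.
  by rewrite big_bool.
exists (fun t : m.+1.-tuple bool => (thead t, [tuple of behead t])).
  by move=> [b t] _ /=; congr pair; apply: val_inj.
move=> t _; apply: val_inj => /=.
by case: t => [[|b s] //= _].
Qed.
End S.
Section T.
Variable R : realType.
Variables p q : R.

Fixpoint wt (w : seq bool) : R :=
  if w is b :: w' then (if b then q else p) * wt w' else 1.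

Lemma wt_dyck h (t : seq bool) : dyck_from h t ->
  exists s, size t = (s.*2 + h)%N /\ wt t = (p * q) ^+ s * p ^+ h.
Proof.
elim: t h => [|b t IH] h /=.
  by move=> /eqP ->; exists 0%N; rewrite mulr1.
case: b.
  move=> /IH [s [Hs Hw]]; exists s.+1; split; first by rewrite Hs; lia.
  by rewrite Hw !exprS; ring.
case: h => [//|h] /IH [s [Hs Hw]]; exists s; split; first by rewrite Hs; lia.
by rewrite Hw !exprS; ring.
Qed.

Lemma wt_nseq k : wt (nseq k false) = p ^+ k.
Proof. by elim: k => [|k IH] //=; rewrite IH exprS. Qed.

Lemma dyck_nseq h k : dyck_from h (nseq k false) = (h == k).
Proof. by elim: k h => [|k IH] [|h] //=. Qed.

Variable n : nat.

Definition Esum h m : R :=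
  \sum_(t : m.-tuple bool) (if dyck_from h t && ends_SHn n t then wt t else 0).

Lemma sum_tuple_eq m (s : seq bool) (F : seq bool -> R) :
  \sum_(t : m.-tuple bool) (if val t == s then F t else 0) =
  if size s == m then F s else 0.
Proof.
case: eqP => Hs.
  subst m. rewrite (bigD1 (in_tuple s)) //= eqxx big1 ?addr0 //.
  move=> t /eqP Ht; case: eqP => // E; case: Ht; exact: val_inj.
rewrite big1 // => t _; case: eqP => // E; case: Hs; by rewrite -E size_tuple.
Qed.

Lemma Esum0 h : Esum h 0 = 0.
Proof.
rewrite /Esum big1 // => t _; rewrite tuple0 /= /ends_SHn suffixs0 andbF //.
Qed.

Lemma EsumS h m : Esum h m.+1 =
  q * Esum h.+1 m + (if h is h'.+1 then p * Esum h' m else 0)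
  + (if (m == n) && (h.+1 == n) then q * p ^+ n else 0).
Proof.
rewrite /Esum (@sum_tuple_cons R _ (fun s => if dyck_from h s && ends_SHn n s then wt s else 0)) /=.
have -> : \sum_(t : m.-tuple bool)
    (if dyck_from h.+1 t && ends_SHn n (true :: t) then q * wt t else 0)
  = q * \sum_(t : m.-tuple bool) (if dyck_from h.+1 t && ends_SHn n t then wt t else 0)
    + \sum_(t : m.-tuple bool) (if val t == nseq n false then
             (if dyck_from h.+1 t then q * wt t else 0) else 0).
  rewrite mulr_sumr -big_split /=; apply: eq_bigr => t _.
  rewrite /ends_SHn suffix_consE eqseq_cons /=.
  case: eqP => E.
    have -> : suffix (true :: nseq n false) t = false.
      apply/negP => /suffixP [s' Et]; move: E; rewrite Et => E.
      move: (congr1 (count id) E); rewrite count_cat /= count_nseq /= mul0n; lia.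
    by rewrite -E eqxx /= andbF mulr0 add0r andbT.
  have -> : (val t == nseq n false) = false by apply/eqP => H; apply: E; rewrite H.
  by rewrite /= addr0; case: ifP; rewrite ?mulr0.
rewrite (@sum_tuple_eq m (nseq n false) (fun s => if dyck_from h.+1 s then q * wt s else 0)) size_nseq dyck_nseq wt_nseq.
have -> : \sum_(t : m.-tuple bool)
    (if (if h is h'.+1 then dyck_from h' t else false) && ends_SHn n (false :: t)
     then p * wt t else 0)
  = (if h is h'.+1 then p * \sum_(t : m.-tuple bool) (if dyck_from h' t && ends_SHn n t then wt t else 0) else 0).
  case: h => [|h]; first by rewrite big1.
  rewrite mulr_sumr; apply: eq_bigr => t _.
  rewrite /ends_SHn suffix_consE /=; case: ifP; by rewrite ?mulr0.
rewrite -addrA [X in _ + X]addrC addrA; congr (_ + _).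
by rewrite eq_sym; case: (m == n); case: (h.+1 == n).
Qed.
End T.
Section U.
Variable R : realType.
Variables p q : R.

Fixpoint V (g h m : nat) : R :=
  match m with
  | 0 => (h == g)%:R
  | m'.+1 => q * V g h.+1 m' + (if h is h'.+1 then p * V g h' m' else 0)
  end.

Lemma Esum_V n (hn : (1 <= n)%N) h m :
  Esum p q n h m = if (n.+1 <= m)%N then q * p ^+ n * V n.-1 h (m - n.+1) else 0.
Proof.
elim: m h => [|m IH] h; first by rewrite Esum0.
rewrite EsumS; case: h => [|h]; rewrite !IH;
have [Hlt|Hgt|Heq] := ltngtP m n.
all: try (have -> : (n < m.+1)%N = false by lia).
all: try (have -> : (n < m.+1)%N = true by lia).
all: try (have -> : (m.+1 - n.+1 = (m - n.+1).+1)%N by lia).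
all: rewrite /= ?mulr0 ?addr0 ?add0r //.
all: try ring.
all: subst m; rewrite subSS subnn /=.
all: clear IH; case: n hn => [|n] // _ /=; rewrite ?eqSS.
all: by case: eqP; rewrite ?mulr1 ?mulr0.
Qed.


Lemma VS g h m : V g h m.+1 =
  q * V g h.+1 m + (if h is h'.+1 then p * V g h' m else 0).
Proof. by []. Qed.

Lemma V0 g h : V g h 0 = (h == g)%:R.
Proof. by []. Qed.

Lemma V_last g h m : V g h m.+1 =
  (if g is g'.+1 then q * V g' h m else 0) + p * V g.+1 h m.
Proof.
elim: m g h => [|m IH] g h.
{ rewrite VS !V0; case: g => [|g]; case: h => [|h]; rewrite ?eqSS ?mulr0 ?addr0 ?add0r //.
  all: try (case: (h == g); rewrite ?mulr0 ?mulr1 ?addr0 ?add0r //).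
  all: try (case: eqP; rewrite ?mulr0 ?mulr1 ?addr0 ?add0r //; lia).
}
rewrite (VS g h m.+1).
case: h => [|h]; case: g => [|g].
- by rewrite (IH 0 1) (VS 1 0 m) /=; ring.
- by rewrite (IH g.+1 1) (VS g.+2 0 m) (VS g 0 m) /=; ring.
- by rewrite (IH 0 h.+2) (IH 0 h) (VS 1 h.+1 m) /=; ring.
- by rewrite (IH g.+1 h.+2) (IH g.+1 h) (VS g.+2 h.+1 m) (VS g h.+1 m) /=; ring.
Qed.
End U.
Section W.
Variable R : realType.
Variables p q : R.

Lemma V_sym m g h :
  V p q g h m * p ^+ g * q ^+ h = V p q h g m * q ^+ g * p ^+ h.
Proof.
elim: m g h => [|m IH] g h.
  rewrite !V0; have [->|ne] := eqVneq h g; first by rewrite ?eqxx /=; ring.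
  by rewrite /= !mul0r.
rewrite VS V_last.
case: h => [|h].
  transitivity (V p q g 1 m * p ^+ g * q ^+ 1); first by rewrite /=; ring.
  by rewrite IH /=; ring.
transitivity (V p q g h.+2 m * p ^+ g * q ^+ h.+2 + p * q * (V p q g h m * p ^+ g * q ^+ h)).
  by rewrite /= !exprS; ring.
by rewrite !IH /= !exprS; ring.
Qed.
End W.
Section X.
Variable R : realType.
Variables p q : R.

Lemma V_odd g m h : odd (g + h + m) -> V p q g h m = 0.
Proof.
elim: m h => [|m IH] h.
  rewrite addn0 V0; have [->|//] := eqVneq h g.
  by rewrite addnn odd_double.
move=> Ho; rewrite VS IH; last by rewrite addnS addSn -addnS.
case: h Ho => [|h] Ho; first by rewrite mulr0 addr0.
rewrite IH ?mulr0 ?addr0 //.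
by move: Ho; rewrite !addnS !addSn /= negbK.
Qed.

Definition Ssum M h := \sum_(m < M) V p q 0 h m.

Fixpoint Rs M h : R :=
  match M with
  | 0 => 1
  | M'.+1 => q * Rs M' h.+1 + (if h is h'.+1 then p * Rs M' h' else 0)
  end.

Lemma SsumS M h : Ssum M.+1 h =
  (h == 0)%:R + q * Ssum M h.+1 + (if h is h'.+1 then p * Ssum M h' else 0).
Proof.
rewrite /Ssum big_ord_recl V0 -addrA; congr (_ + _).
under eq_bigr do rewrite VS.
rewrite big_split /= -mulr_sumr; congr (_ + _).
case: h => [|h]; first by rewrite big1.
by rewrite mulr_sumr.
Qed.

Hypothesis hpq : p + q = 1.

Lemma S_R M h : p * Ssum M h + Rs M h = 1.
Proof.
elim: M h => [|M IH] h; first by rewrite /Ssum big_ord0 mulr0 add0r.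
rewrite SsumS /=.
case: h => [|h].
  have := IH 1%N; rewrite /= => E.
  transitivity (p + q * (p * Ssum M 1 + Rs M 1)); first ring.
  by rewrite E mulr1 hpq.
have E1 := IH h.+2; have E2 := IH h.
transitivity (q * (p * Ssum M h.+2 + Rs M h.+2) + p * (p * Ssum M h + Rs M h)); first by rewrite /=; ring.
by rewrite E1 E2 !mulr1 addrC hpq.
Qed.

Lemma Rs_ge0 M h : 0 <= p -> 0 <= q -> 0 <= Rs M h.
Proof.
move=> hp hq; elim: M h => [|M IH] h //=.
by case: h => [|h]; rewrite ?addr0; [apply: mulr_ge0 | apply: addr_ge0; apply: mulr_ge0].
Qed.

Lemma Rs_le M h r : 0 <= p -> 0 <= q -> 1 <= r ->
  Rs M h <= r ^+ h * (q * r + p / r) ^+ M.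
Proof.
move=> hp hq hr.
have r0 : 0 < r by apply: lt_le_trans hr.
have hY : 0 <= p / r by apply: divr_ge0 => //; apply: ltW.
elim: M h => [|M IH] h /=; first by rewrite expr0 mulr1 exprn_ege1.
have hX : 0 <= (q * r + p / r) ^+ M.
  by apply: exprn_ge0; apply: addr_ge0 => //; apply: mulr_ge0 => //; apply: ltW.
case: h => [|h].
  rewrite addr0; apply: le_trans (ler_wpM2l hq (IH 1%N)) _.
  rewrite expr0 mul1r expr1 exprSr.
  have := mulr_ge0 hX hY; nra.
apply: le_trans (lerD (ler_wpM2l hq (IH h.+2)) (ler_wpM2l hp (IH h))) _.
rewrite le_eqVlt; apply/orP; left; apply/eqP.
rewrite !exprS; field; apply/lt0r_neq0 => //.
Qed.
End X.
Section Y.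
Variable R : realType.
Variables p q : R.

Lemma reidx g K :
  \sum_(k < K) (if (g.+2 <= k.*2)%N then V p q 0 g (k.*2 - g.+2) else 0) =
  Ssum p q (K.*2 - g.+2) g.
Proof.
elim: K => [|K IH]; first by rewrite big_ord0 /Ssum big_ord0.
rewrite big_ord_recr /= IH.
case: (leqP g.+2 K.*2) => H.
  have -> : ((K.+1).*2 - g.+2 = (K.*2 - g.+2).+2)%N by rewrite doubleS; lia.
  rewrite /Ssum -!(big_mkord xpredT) !big_nat_recr // (@V_odd R p q 0 (K.*2 - g.+2).+1 g); first by rewrite /= addr0.
  have -> : (0 + g + (K.*2 - g.+2).+1 = (K.*2).-1)%N by lia.
  case: K H {IH} => [|K] H //; by rewrite doubleS /= odd_double.
rewrite addr0.
have -> : (K.*2 - g.+2 = 0)%N by lia.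
have : ((K.+1).*2 - g.+2 <= 1)%N by rewrite doubleS; lia.
case E: ((K.+1).*2 - g.+2)%N => [|[|]] // _.
rewrite /Ssum -!(big_mkord xpredT) big_nat_recr // big_geq // (@V_odd R p q 0 0 g); first by rewrite /= addr0.
have -> : g = (K.-1).*2.+1 by move: E H; rewrite -!muln2; lia.
by rewrite add0n addn0 /= odd_double.
Qed.

Lemma Pbar_level_E n k :
  Pbar_level p q (ends_SHn n) k = p * Esum p q n 0 k.*2.
Proof.
rewrite /Pbar_level /Esum big_mkcond mulr_sumr; apply: eq_bigr => t _ /=.
rewrite /dyck; case: ifP => [/andP [Hd _] | _]; last by rewrite mulr0.
have [s [Hs Hw]] := wt_dyck p q Hd.
rewrite /Pbar /half_len Hw expr0 mulr1; congr (_ * (_ ^+ _)).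
rewrite size_tuple in Hs *; rewrite addn0 in Hs.
by rewrite Hs doubleK.
Qed.
End Y.
Lemma series_eq (R : realType) (p q : R) (hp : 0 < p) (hpq : p + q = 1) n (hn : (1 <= n)%N) K :
  series (Pbar_level p q (ends_SHn n)) K = p * q ^+ n * (1 - Rs p q (K.*2 - n.+1) n.-1).
Proof.
rewrite /series /= big_mkord.
under eq_bigr do rewrite Pbar_level_E (Esum_V _ _ hn).
case: n hn => [//|g] _ /=.
have pg : p ^+ g != 0 by apply: expf_neq0; rewrite gt_eqF.
have key m : V p q g 0 m = V p q 0 g m * q ^+ g / p ^+ g.
  have := V_sym p q m g 0; rewrite !expr0 !mulr1 => <-; field => //.
transitivity (q * p ^+ g.+1 * q ^+ g / p ^+ g * (p * Ssum p q (K.*2 - g.+2) g)).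
  rewrite -reidx !mulr_sumr; apply: eq_bigr => k _; case: ifP => _; last by rewrite !mulr0.
  by rewrite key; field.
have E := S_R hpq (K.*2 - g.+2) g.
rewrite (_ : p * Ssum p q (K.*2 - g.+2) g = 1 - Rs p q (K.*2 - g.+2) g); last by rewrite -E addrK.
rewrite !exprS; field => //.
Qed.

Theorem lemma9 (R : realType) (p q : R) (hq : 0 < q) (hqp : q < p)
  (hpq : p + q = 1) (n : nat) (hn : (1 <= n)%N) :
  series (Pbar_level p q (ends_SHn n)) @ \oo --> p * q ^+ n.
Proof.
have hp : 0 < p by apply: lt_trans hqp.
set L := p * q ^+ n.
set r := (2 * q)^-1.
set rho := q * r + p / r.
have hr : 1 <= r.
  rewrite /r -div1r ler_pdivlMr; lra.
have r0 : 0 < r by lra.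
have hrho : rho = 2^-1 + 2 * p * q by rewrite /rho /r; field; lra.
have rho0 : 0 < rho by rewrite hrho; have := mulr_gt0 hp hq; move=> ?; lra.
have rho1 : rho < 1.
  rewrite hrho; have h2 : (p - q) * (p - q) > 0 by apply: mulr_gt0; lra.
  have h3 : (p + q) * (p + q) = 1 by rewrite hpq mulr1.
  nra.
have L0 : 0 <= L by apply: mulr_ge0; [lra | apply: exprn_ge0; lra].
set C := L * r ^+ n.-1 / rho ^+ n.+1.
apply: (@squeeze_cvgr _ _ _ _ (fun K => L - C * rho ^+ K) (fun _ => L)).
- apply: nearW => K; rewrite series_eq //.
  have R0 : 0 <= Rs p q (K.*2 - n.+1) n.-1 := Rs_ge0 _ _ (ltW hp) (ltW hq).
  have R1 : Rs p q (K.*2 - n.+1) n.-1 <= r ^+ n.-1 * (q * r + p / r) ^+ (K.*2 - n.+1) := Rs_le _ _ (ltW hp) (ltW hq) hr.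
  rewrite -/r -/rho in R1.
  have hM : rho ^+ (K.*2 - n.+1) * rho ^+ n.+1 <= rho ^+ K.
    rewrite -exprD; apply: ler_wiXn2l; [lra | lra | rewrite -muln2; lia].
  have hM' : rho ^+ (K.*2 - n.+1) <= rho ^+ K / rho ^+ n.+1.
    by rewrite ler_pdivlMr ?exprn_gt0.
  apply/andP; split; last by rewrite -/L; nra.
  rewrite -/L /C.
  have : Rs p q (K.*2 - n.+1) n.-1 <= r ^+ n.-1 * (rho ^+ K / rho ^+ n.+1).
    apply: le_trans R1 _; apply: ler_wpM2l => //; apply: exprn_ge0; lra.
  move=> H; have := ler_wpM2l L0 H.
  have -> : L * r ^+ n.-1 / rho ^+ n.+1 * rho ^+ K = L * (r ^+ n.-1 * (rho ^+ K / rho ^+ n.+1)) by rewrite !mulrA; field; apply: lt0r_neq0; apply: exprn_gt0.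
  nra.
- have H0 : (fun K => C * rho ^+ K) @ \oo --> 0.
    rewrite -(mulr0 C); apply: cvgMr; apply: cvg_expr; rewrite ger0_norm; lra.
  have := cvgB (cvg_cst L) H0; rewrite subr0; exact.
- exact: cvg_cst.
Qed.
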